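(* Let $G'$ be any orientation of a series-parallel graph $G$. Then $\chi'_o(G')\le 7$.
   Context: An orientation of an undirected graph replaces each edge $\{u,v\}$ by exactly one of the arcs $(u,v)$, $(v,u)$. An oriented $r$-arc-coloring of a digraph $G=(V,E)$ is a map $c:E\to\{1,\dots,r\}$ such that (i) $c((u,v))\ne c((v,w))$ for every two arcs $(u,v),(v,w)\in E$, and (ii) $c((u,v))\ne c((y,z))$ for all arcs $(u,v),(v,w),(x,y),(y,z)\in E$ with $c((v,w))=c((x,y))$; $\chi'_o(G)$ is the smallest such $r$. Two-terminal series-parallel multigraphs with terminals $(s,t)$ are defined recursively: a single edge $\{s,t\}$ with $s\ne t$ is one; if $(G_1,s_1,t_1),(G_2,s_2,t_2)$ are vertex-disjoint ones, then the parallel composition (identify $s_1$ with $s_2$ and $t_1$ with $t_2$) with terminals $(s_1,t_1)$, and the series composition (identify $t_1$ with $s_2$) with terminals $(s_1,t_2)$, are again ones. A (simple) graph is series-parallel if it is obtained from a two-terminal series-parallel multigraph by merging parallel edges. *)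

(* Defs.v *)
From mathcomp Require Import all_boot.
Set Implicit Arguments. Unset Strict Implicit. Unset Printing Implicit Defensive.

(* Two-terminal series-parallel multigraphs, with vertices labelled by
   natural numbers.  [sp V E s t]: vertex list V, edge list E (each edge an
   unordered pair stored as (u,v); repeated entries = parallel edges),
   terminals (s,t).  Vertex-disjointness of the two parts, followed by the
   identification of terminals, is expressed by requiring that the two
   vertex sets share exactly the identified vertices. *)
Inductive sp : seq nat -> seq (nat * nat) -> nat -> nat -> Prop :=
| sp_edge s t : s != t -> sp [:: s; t] [:: (s, t)] s t
| sp_par V1 E1 V2 E2 s t :
    sp V1 E1 s t -> sp V2 E2 s t ->
    (forall x, x \in V1 -> x \in V2 -> (x == s) || (x == t)) ->
    sp (V1 ++ [seq x <- V2 | x \notin V1]) (E1 ++ E2) s t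
| sp_ser V1 E1 V2 E2 s m t :
    sp V1 E1 s m -> sp V2 E2 m t ->
    (forall x, x \in V1 -> x \in V2 -> x == m) ->
    sp (V1 ++ [seq x <- V2 | x \notin V1]) (E1 ++ E2) s t.

(* A simple graph (T, e) (e symmetric, irreflexive) is series-parallel if it
   is isomorphic to the graph obtained from some two-terminal series-parallel
   multigraph by merging parallel edges. *)
Definition series_parallel (T : finType) (e : rel T) : Prop :=
  exists (V : seq nat) (E : seq (nat * nat)) (s t : nat) (f : T -> nat),
    [/\ sp V E s t, injective f, (forall v, v \in V -> exists x, f x = v),
        (forall x, f x \in V) &
        (forall x y, e x y <-> ((f x, f y) \in E \/ (f y, f x) \in E))].

Definition orientation (T : finType) (e : rel T) (a : rel T) : Prop :=
  forall x y, (a x y -> e x y) /\ (e x y -> (a x y && ~~ a y x) || (a y x && ~~ a x y)).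

(* Oriented r-arc-coloring of the digraph a; c is read only on arcs. *)
Definition oriented_arc_coloring (T : finType) (a : rel T) (r : nat)
    (c : T -> T -> 'I_r) : Prop :=
  (forall u v w, a u v -> a v w -> c u v != c v w) /\
  (forall u v w x y z, a u v -> a v w -> a x y -> a y z ->
     c v w = c x y -> c u v != c y z).

Definition oriented_chromatic_index_le (T : finType) (a : rel T) (r : nat) : Prop :=
  exists c : T -> T -> 'I_r, oriented_arc_coloring a c.

(* Main.v *)
Require Import Defs.
From mathcomp Require Import all_boot.
Definition arcN (i j : nat) : bool := ((j + 7 - i) %% 7 \in [:: 1; 2; 4]).
Definition I7 := iota 0 7.
Definition B2 := [:: true; false].
Lemma arcN_factsb : all (fun i => all (fun j => arcN i j ==> (i != j) && ~~ arcN j i) I7) I7.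
Proof. by []. Qed.
Lemma qrNb : all (fun a => all (fun b => all (fun p1 => all (fun p2 => all (fun p3 => all (fun p4 =>
  [&& a != b, ~~ (p1 && p2) & ~~ (p3 && p4)] ==>
  has (fun c => [&& c != a, c != b, p1 ==> arcN a c, p2 ==> arcN c a, p3 ==> arcN c b & p4 ==> arcN b c]) I7)
  B2) B2) B2) B2) I7) I7.
Proof. by []. Qed.
Lemma arcR_facts (i j : 'I_7) : arcN i j -> (i != j) && ~~ arcN j i.
Proof.
have := arcN_factsb => /allP /(_ i); rewrite mem_iota ltn_ord => /(_ isT) /allP /(_ j).
rewrite mem_iota ltn_ord => /(_ isT) /implyP H /H.
by rewrite -(inj_eq val_inj).
Qed.
Lemma qr_prop (a b : 'I_7) (p1 p2 p3 p4 : bool) : a != b -> ~~ (p1 && p2) -> ~~ (p3 && p4) ->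
  exists c : 'I_7, [&& c != a, c != b, p1 ==> arcN a c, p2 ==> arcN c a, p3 ==> arcN c b & p4 ==> arcN b c].
Proof.
move=> ab h12 h34.
have := qrNb => /allP /(_ a); rewrite mem_iota ltn_ord => /(_ isT) /allP /(_ b).
rewrite mem_iota ltn_ord => /(_ isT).
have hb : forall p : bool, p \in B2 by case.
move=> /allP /(_ p1 (hb _)) /allP /(_ p2 (hb _)) /allP /(_ p3 (hb _)) /allP /(_ p4 (hb _)).
rewrite (inj_eq val_inj) ab h12 h34 => /implyP /(_ isT) /hasP [c]; rewrite mem_iota /= => hc Hc.
by exists (Ordinal hc).
Qed.
Set Implicit Arguments. Unset Strict Implicit. Unset Printing Implicit Defensive.

Definition edgeE (E : seq (nat * nat)) m n := ((m, n) \in E) || ((n, m) \in E).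
Definition Dok E (A : rel nat) s t (a b : 'I_7) :=
  [&& a != b, (edgeE E s t && A s t) ==> arcN a b & (edgeE E s t && A t s) ==> arcN b a].
Definition Hom E (A : rel nat) (phi : nat -> 'I_7) :=
  forall m n, edgeE E m n -> A m n -> arcN (phi m) (phi n).
Definition Asym E (A : rel nat) := forall m n, edgeE E m n -> ~~ (A m n && A n m).

Lemma in_catf (V1 V2 : seq nat) x : x \in V2 -> x \in V1 ++ [seq y <- V2 | y \notin V1].
Proof. by rewrite mem_cat mem_filter => ->; case: (x \in V1). Qed.

Lemma sp_in V E s t : sp V E s t ->
  [/\ s \in V, t \in V & forall m n, (m, n) \in E -> (m \in V) && (n \in V)].
Proof.
elim=> {V E s t}.
- move=> s t _; split; rewrite ?inE ?eqxx ?orbT //.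
  by move=> m n; rewrite mem_seq1 => /eqP [-> ->]; rewrite !inE !eqxx orbT.
- move=> V1 E1 V2 E2 s t _ [s1 t1 e1] _ [s2 t2 e2] _; split; rewrite ?mem_cat ?s1 ?t1 //.
  move=> m n; rewrite mem_cat => /orP [/e1 | /e2] /andP [hm hn].
    by rewrite !mem_cat hm hn.
  by rewrite !in_catf.
- move=> V1 E1 V2 E2 s m t _ [s1 t1 e1] _ [s2 t2 e2] _; split.
  - by rewrite mem_cat s1.
  - by rewrite in_catf.
  move=> x y; rewrite mem_cat => /orP [/e1 | /e2] /andP [hm hn].
    by rewrite !mem_cat hm hn.
  by rewrite !in_catf.
Qed.

Lemma edgeE_cat E1 E2 m n : edgeE (E1 ++ E2) m n = edgeE E1 m n || edgeE E2 m n.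
Proof. rewrite /edgeE !mem_cat; by case: ((m,n) \in E1); case: ((n,m) \in E1); case: ((m,n) \in E2). Qed.

Lemma edgeE_in V E s t m n : sp V E s t -> edgeE E m n -> (m \in V) && (n \in V).
Proof.
move=> /sp_in [_ _ h]; rewrite /edgeE => /orP [/h // | /h]; by rewrite andbC.
Qed.

Lemma glue V1 E1 s1 t1 V2 E2 s2 t2 A (phi1 phi2 : nat -> 'I_7) :
  sp V1 E1 s1 t1 -> sp V2 E2 s2 t2 -> Hom E1 A phi1 -> Hom E2 A phi2 ->
  (forall x, x \in V1 -> x \in V2 -> phi1 x = phi2 x) ->
  Hom (E1 ++ E2) A (fun x => if x \in V1 then phi1 x else phi2 x).
Proof.
move=> sp1 sp2 h1 h2 agr m n; rewrite edgeE_cat => /orP [] he hA.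
  by have /andP [-> ->] := edgeE_in sp1 he; apply: h1.
have /andP [hm hn] := edgeE_in sp2 he.
have -> : (if m \in V1 then phi1 m else phi2 m) = phi2 m.
  by case: ifP => // /agr ->.
have -> : (if n \in V1 then phi1 n else phi2 n) = phi2 n.
  by case: ifP => // /agr ->.
exact: h2.
Qed.

Lemma main_ind V E s t : sp V E s t -> forall A, Asym E A -> forall a b, Dok E A s t a b ->
  exists phi : nat -> 'I_7, [/\ phi s = a, phi t = b & Hom E A phi].
Proof.
elim=> {V E s t}.
- move=> s t st A _ a b /and3P [ab h1 h2].
  exists (fun x => if x == s then a else b); split; rewrite ?eqxx //.
    by rewrite eq_sym (negbTE st).
  move=> m n; rewrite /edgeE !mem_seq1 => /orP [] /eqP [-> ->] hA.
    by rewrite eqxx eq_sym (negbTE st); move: h1; rewrite /edgeE mem_seq1 eqxx hA.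
  by rewrite eqxx eq_sym (negbTE st); move: h2; rewrite /edgeE mem_seq1 eqxx hA.
- move=> V1 E1 V2 E2 s t sp1 IH1 sp2 IH2 disj A asy a b /and3P [ab h1 h2].
  have [asy1 asy2] : Asym E1 A /\ Asym E2 A.
    by split=> m n he; apply: asy; rewrite edgeE_cat he ?orbT.
  have [phi1 [s1 t1 hom1]] : exists phi, [/\ phi s = a, phi t = b & Hom E1 A phi].
    apply: IH1 => //; rewrite /Dok ab /=; apply/andP; split; apply/implyP => /andP [he hA].
      by apply: (implyP h1); rewrite edgeE_cat he hA.
    by apply: (implyP h2); rewrite edgeE_cat he hA.
  have [phi2 [s2 t2 hom2]] : exists phi, [/\ phi s = a, phi t = b & Hom E2 A phi].
    apply: IH2 => //; rewrite /Dok ab /=; apply/andP; split; apply/implyP => /andP [he hA].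
      by apply: (implyP h1); rewrite edgeE_cat he hA orbT.
    by apply: (implyP h2); rewrite edgeE_cat he hA orbT.
  have [sV1 tV1 _] := sp_in sp1.
  exists (fun x => if x \in V1 then phi1 x else phi2 x); split; rewrite ?sV1 ?tV1 //.
  apply: glue sp1 sp2 hom1 hom2 _ => x x1 x2.
  by case/orP: (disj x x1 x2) => /eqP ->; rewrite ?s1 ?s2 ?t1 ?t2.
- move=> V1 E1 V2 E2 s m t sp1 IH1 sp2 IH2 disj A asy a b /and3P [ab _ _].
  have [asy1 asy2] : Asym E1 A /\ Asym E2 A.
    by split=> x y he; apply: asy; rewrite edgeE_cat he ?orbT.
  have [c /and5P [ca cb q1 q2 /andP [q3 q4]]] :=
    qr_prop a b (edgeE E1 s m && A s m) (edgeE E1 s m && A m s)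
            (edgeE E2 m t && A m t) (edgeE E2 m t && A t m) ab
            (ltac:(case: (boolP (edgeE E1 s m)) => he //=; exact: asy1 he))
            (ltac:(case: (boolP (edgeE E2 m t)) => he //=; exact: asy2 he)).
  have [phi1 [s1 m1 hom1]] : exists phi, [/\ phi s = a, phi m = c & Hom E1 A phi].
    by apply: IH1 => //; rewrite /Dok eq_sym ca q1 q2.
  have [phi2 [m2 t2 hom2]] : exists phi, [/\ phi m = c, phi t = b & Hom E2 A phi].
    by apply: IH2 => //; rewrite /Dok cb q3 q4.
  have [sV1 _ _] := sp_in sp1.
  have [_ tV2 _] := sp_in sp2.
  have agr : forall x, x \in V1 -> x \in V2 -> phi1 x = phi2 x.
    by move=> x x1 x2; move/eqP: (disj x x1 x2) => ->; rewrite m1 m2.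
  exists (fun x => if x \in V1 then phi1 x else phi2 x); split; rewrite ?sV1 //.
    by case: ifP => // /agr -> //.
  exact: glue sp1 sp2 hom1 hom2 agr.
Qed.

Theorem mainTheorem13 (T : finType) (e : rel T) (a : rel T) :
  symmetric e -> irreflexive e -> series_parallel e -> orientation e a ->
  oriented_chromatic_index_le a 7.
Proof.
move=> _ _ [V [E [s [t [f [spG finj _ _ ef]]]]]] ori.
pose A : rel nat := fun m n => [exists x, exists y, [&& f x == m, f y == n & a x y]].
have asy : Asym E A.
  move=> m n _; apply/negP => /andP [/existsP [x /existsP [y /and3P [/eqP fx /eqP fy axy]]]].
  move=> /existsP [x' /existsP [y' /and3P [/eqP fx' /eqP fy' ayx]]].
  have ex' : x' = y by apply: finj; rewrite fx' fy.
  have ey' : y' = x by apply: finj; rewrite fy' fx.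
  subst x' y'.
  have [_ h] := ori x y; have [h1 _] := ori x y.
  by move: (h (h1 axy)); rewrite axy ayx.
pose a0 : 'I_7 := Ordinal (isT : 0 < 7).
pose b0 : 'I_7 := if edgeE E s t && A t s then Ordinal (isT : 6 < 7) else Ordinal (isT : 1 < 7).
have D : Dok E A s t a0 b0.
  rewrite /Dok /b0; case: (boolP (edgeE E s t)) => he //=.
  case: (boolP (A t s)) => hts /=; last by case: (A s t).
  by have := asy _ _ he; rewrite hts andbT => /negbTE ->.
have [phi [_ _ hom]] := main_ind spG asy D.
exists (fun u v => phi (f u)).
have arc : forall x y, a x y -> arcN (phi (f x)) (phi (f y)).
  move=> x y axy; apply: hom.
    have [h1 _] := ori x y; have := (ef x y).1 (h1 axy).
    by rewrite /edgeE => -[] ->; rewrite ?orbT.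
  by apply/existsP; exists x; apply/existsP; exists y; rewrite !eqxx axy.
split.
  by move=> u v w /arc /(arcR_facts _ _) /andP [].
move=> u v w x y z /arc huv _ /arc hxy _ hvx; apply/eqP => huy.
move: hxy; rewrite -hvx -huy => hvu.
by move: (arcR_facts _ _ huv) => /andP [_]; rewrite hvu.
Qed.
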